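(* Let $\mathbf{G}$ be a group (possibly non-commutative) with identity $1_{\mathbf{G}}$, and let $f:W\to\mathbf{G}$ be a $\mathbf{G}$-valued reciprocity function. For $(p,q)\in W$, choose integers $a_0,\dots,a_n$ ($n\ge 0$) with $$q=Q^{(n)}(a_0,\dots,a_n),\qquad p=P^{(n)}(a_0,\dots,a_n),$$ for $i=1,\dots,n$ put $q_i:=Q^{(n-i)}(a_i,\dots,a_n)$, $p_i:=P^{(n-i)}(a_i,\dots,a_n)$, and define $$\mathcal{D}(p,q):=f(p_1,q_1)^{-1}f(p_2,q_2)^{-1}\cdots f(p_n,q_n)^{-1}\in\mathbf{G}$$ (the empty product, for $n=0$, being $1_{\mathbf{G}}$). Then: (i) $\mathcal{D}(p,q)$ depends only on $(p,q)$ and not on the choice of the sequence $(a_0,\dots,a_n)$; (ii) the function $\mathcal{D}:W\to\mathbf{G}$ thus defined is a generalized $\mathbf{G}$-valued Dedekind symbol with reciprocity function $f$.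
   Context: $W:=\{(p,q)\in\mathbb{Z}\times\mathbb{Z} : \gcd(p,q)=1\}$. A $\mathbf{G}$-valued reciprocity function is a map $f:W\to\mathbf{G}$ such that for all relevant $(p,q)$: $f(p,-q)=f(-p,q)$; $f(p,q)f(-q,p)=1_{\mathbf{G}}$; and $f(p,p+q)f(p+q,q)=f(p,q)$. Given such $f$, a generalized $\mathbf{G}$-valued Dedekind symbol with reciprocity function $f$ is a map $\mathcal{D}:W\to\mathbf{G}$ such that $\mathcal{D}(p,q)=\mathcal{D}(p,q+p)$, $\mathcal{D}(p,-q)=\mathcal{D}(-p,q)$, and $\mathcal{D}(p,q)\mathcal{D}(q,-p)^{-1}=f(p,q)$ for all $(p,q)\in W$. The polynomials $Q^{(n)},P^{(n)}\in\mathbb{Z}[A_0,\dots,A_n]$ in commuting variables are defined inductively by $Q^{(0)}(A_0)=A_0$, $P^{(0)}(A_0)=1$, and $Q^{(n+1)}(A_0,\dots,A_{n+1})=A_0Q^{(n)}(A_1,\dots,A_{n+1})-P^{(n)}(A_1,\dots,A_{n+1})$, $P^{(n+1)}(A_0,\dots,A_{n+1})=Q^{(n)}(A_1,\dots,A_{n+1})$; thus $Q^{(n)}/P^{(n)}$ is the continued fraction $A_0-\cfrac{1}{A_1-\cfrac{1}{\ddots-\cfrac{1}{A_n}}}$. The paper assumes every $(p,q)\in W$ admits such a presentation $(a_0,\dots,a_n)$. *)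

(* Defs.v *)
From Stdlib Require Import ZArith List.
Open Scope Z_scope.

Record Group := {
  carrier :> Type;
  gmul : carrier -> carrier -> carrier;
  gone : carrier;
  ginv : carrier -> carrier;
  gmulA : forall x y z, gmul x (gmul y z) = gmul (gmul x y) z;
  gmul1x : forall x, gmul gone x = x;
  gmulx1 : forall x, gmul x gone = x;
  gmulVx : forall x, gmul (ginv x) x = gone;
  gmulxV : forall x, gmul x (ginv x) = gone
}.

Definition inW (p q : Z) : Prop := Z.gcd p q = 1.

(* A G-valued reciprocity function f : W -> G (given as a function on Z*Z,
   only its values on W matter). *)
Definition is_reciprocity_function (G : Group) (f : Z -> Z -> G) : Prop :=
  forall p q, inW p q ->
    f p (- q) = f (- p) q /\
    gmul G (f p q) (f (- q) p) = gone G /\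
    gmul G (f p (p + q)) (f (p + q) q) = f p q.

Definition is_gen_Dedekind_symbol (G : Group) (f D : Z -> Z -> G) : Prop :=
  forall p q, inW p q ->
    D p q = D p (q + p) /\
    D p (- q) = D (- p) q /\
    gmul G (D p q) (ginv G (D q (- p))) = f p q.

(* cfQP [a_0; ...; a_n] = (Q^(n)(a_0..a_n), P^(n)(a_0..a_n)).
   The base value on the empty list, (1, 0), makes the recursion
   Q^(n+1)(a::l) = a Q^(n)(l) - P^(n)(l), P^(n+1)(a::l) = Q^(n)(l)
   uniform, and gives Q^(0)(a) = a, P^(0)(a) = 1 as required. *)
Fixpoint cfQP (l : list Z) : Z * Z :=
  match l with
  | nil => (1, 0)
  | a :: l' => let (Q, P) := cfQP l' in (a * Q - P, Q)
  end.

Definition cfQ (l : list Z) : Z := fst (cfQP l).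
Definition cfP (l : list Z) : Z := snd (cfQP l).

(* For l = [a_1; ...; a_n]: the product
   f(p_1,q_1)^-1 f(p_2,q_2)^-1 ... f(p_n,q_n)^-1,
   with q_i = Q^(n-i)(a_i..a_n), p_i = P^(n-i)(a_i..a_n);
   empty product = 1. *)
Fixpoint inv_prod (G : Group) (f : Z -> Z -> G) (l : list Z) : G :=
  match l with
  | nil => gone G
  | a :: l' => gmul G (ginv G (f (cfP (a :: l')) (cfQ (a :: l')))) (inv_prod G f l')
  end.

Definition D_of_seq (G : Group) (f : Z -> Z -> G) (a0 : Z) (l : list Z) : G :=
  inv_prod G f l.

(* Main.v *)
Require Import Defs.
From Stdlib Require Import ZArith List Lia.
Open Scope Z_scope.

Fixpoint Ef (G : Group) (f : Z -> Z -> G) (k : nat) (n r : Z) : G :=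
  match k with
  | O => gone G
  | S k' =>
    if Z.eqb n 0 then ginv G (f 1 0)
    else if Z.eqb r 0 then gone G
    else gmul G (f n r) (Ef G f k' r ((- n) mod r))
  end.

Definition Dstar (G : Group) (f : Z -> Z -> G) (p q : Z) : G :=
  Ef G f (S (Z.to_nat (Z.abs p))) (Z.abs p) ((Z.sgn p * q) mod Z.abs p).

Lemma Ef_fuel G f : forall k k' n r, (Z.to_nat n < k)%nat -> (Z.to_nat n < k')%nat ->
  0 <= n -> 0 <= r -> (r < n \/ n = 0) -> Ef G f k n r = Ef G f k' n r.
Proof.
  induction k; intros k' n r Hk Hk' Hn Hr Hrn; [lia|].
  destruct k'; [lia|]. simpl.
  destruct (Z.eqb_spec n 0); auto.
  destruct (Z.eqb_spec r 0); auto.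
  f_equal. apply IHk; try lia.
  - pose proof (Z.mod_pos_bound (-n) r ltac:(lia)); lia.
  - left; apply Z.mod_pos_bound; lia.
Qed.

Lemma Dunfold G f n r : 0 < r < n -> Dstar G f n r = gmul G (f n r) (Dstar G f r (- n)).
Proof.
  intros H. unfold Dstar.
  rewrite (Z.abs_eq n), (Z.abs_eq r), (Z.sgn_pos n), (Z.sgn_pos r) by lia.
  rewrite !Z.mul_1_l, (Z.mod_small r n) by lia.
  transitivity (gmul G (f n r) (Ef G f (Z.to_nat n) r ((-n) mod r))).
  - cbn [Ef]. destruct (Z.eqb_spec n 0); [lia|]. destruct (Z.eqb_spec r 0); [lia|]. reflexivity.
  - f_equal. apply Ef_fuel; try lia.
    + pose proof (Z.mod_pos_bound (-n) r ltac:(lia)); lia.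
    + left; apply Z.mod_pos_bound; lia.
Qed.

Lemma Dper G f p q k : Dstar G f p (q + k * p) = Dstar G f p q.
Proof.
  unfold Dstar. f_equal.
  destruct (Z.eq_dec p 0). { subst. reflexivity. }
  assert (E : Z.sgn p * (q + k * p) = Z.sgn p * q + k * Z.abs p).
  { destruct (Z_lt_le_dec 0 p).
    - rewrite Z.sgn_pos, Z.abs_eq by lia; ring.
    - rewrite Z.sgn_neg, Z.abs_neq by lia; ring. }
  rewrite E, Z.mod_add by lia. reflexivity.
Qed.

Lemma Dper' G f p q q' k : q' = q + k * p -> Dstar G f p q' = Dstar G f p q.
Proof. intros ->; apply Dper. Qed.

Lemma Dev G f p q : Dstar G f (- p) (- q) = Dstar G f p q.
Proof.
  unfold Dstar. rewrite Z.abs_opp, Z.sgn_opp.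
  replace (- Z.sgn p * - q) with (Z.sgn p * q) by ring. reflexivity.
Qed.

Lemma D1 G f q : Dstar G f 1 q = gone G.
Proof. unfold Dstar. change (Z.abs 1) with 1. rewrite Z.mod_1_r. reflexivity. Qed.

Lemma D0 G f q : Dstar G f 0 q = ginv G (f 1 0).
Proof. reflexivity. Qed.

Lemma g_cancel_l (G : Group) x y z : gmul G x y = gmul G x z -> y = z.
Proof.
  intros H. rewrite <- (gmul1x G y), <- (gmul1x G z), <- (gmulVx G x), <- !gmulA, H. reflexivity.
Qed.

Lemma g_inv_uniq (G : Group) x y : gmul G x y = gone G -> gmul G y x = gone G.
Proof.
  intros H. apply (g_cancel_l G x). rewrite gmulA, H, gmul1x, gmulx1. reflexivity.
Qed.

Definition Rr G f x y := Dstar G f x y = gmul G (f x y) (Dstar G f y (- x)).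

Lemma inW_rot a b : inW a b -> inW b (- a).
Proof. unfold inW. intros H. rewrite Z.gcd_opp_r, Z.gcd_comm. exact H. Qed.

Lemma Rrot G f (Hf : is_reciprocity_function G f) a b :
  inW a b -> Rr G f a b -> Rr G f b (- a).
Proof.
  unfold Rr. intros HW H.
  destruct (Hf b (-a) (inW_rot a b HW)) as [_ [H2 _]].
  rewrite Z.opp_involutive in H2.
  rewrite Dev, H, gmulA, H2, gmul1x. reflexivity.
Qed.

Lemma Rstep G f (Hf : is_reciprocity_function G f) a b c :
  c = a + b -> inW a b -> Rr G f a b -> Rr G f c b -> Rr G f a c.
Proof.
  unfold Rr. intros -> HW H1 H2.
  destruct (Hf a b HW) as [_ [_ H3]].
  rewrite (Dper' G f a b (a + b) 1) by ring.
  rewrite H1, <- H3, <- gmulA. f_equal.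
  rewrite (Dper' G f (a + b) (-a) b 1) in H2 by ring.
  rewrite (Dper' G f b (-a) (-(a+b)) (-1)) in H2 by ring.
  symmetry; exact H2.
Qed.



Lemma g_cancel_r (G : Group) x y z : gmul G y x = gmul G z x -> y = z.
Proof.
  intros H. rewrite <- (gmulx1 G y), <- (gmulx1 G z), <- (gmulxV G x), !gmulA, H. reflexivity.
Qed.

Lemma f11 G f (Hf : is_reciprocity_function G f) : f 1 1 = gone G.
Proof.
  destruct (Hf 1 0 eq_refl) as [_ [_ H]]. simpl in H.
  apply (g_cancel_r G (f 1 0)). rewrite gmul1x. exact H.
Qed.

Lemma Rpos G f (Hf : is_reciprocity_function G f) :
  forall n x y, (Z.to_nat y <= n)%nat -> 0 < x -> 0 < y -> inW x y -> Rr G f x y.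
Proof.
  induction n; intros x y Hn Hx Hy HW; [lia|].
  destruct (Z_lt_le_dec y x).
  - unfold Rr. apply Dunfold. lia.
  - destruct (Z.eq_dec x y).
    + subst. unfold inW in HW. rewrite Z.gcd_diag, Z.abs_eq in HW by lia. subst.
      unfold Rr. rewrite !D1, f11 by exact Hf. rewrite gmul1x. reflexivity.
    + apply (Rstep G f Hf x (y - x) y); try ring.
      * unfold inW in *. replace (y - x) with (y + (-1) * x) by ring.
        rewrite Z.gcd_add_mult_diag_r. exact HW.
      * apply IHn; try lia. unfold inW in *. replace (y - x) with (y + (-1) * x) by ring.
        rewrite Z.gcd_add_mult_diag_r. exact HW.
      * unfold Rr. apply Dunfold. lia.
Qed.

Lemma RQ1 G f (Hf : is_reciprocity_function G f) x y :
  0 < x -> 0 <= y -> inW x y -> Rr G f x y.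
Proof.
  intros Hx Hy HW. destruct (Z.eq_dec y 0).
  - subst. unfold inW in HW. rewrite Z.gcd_0_r, Z.abs_eq in HW by lia. subst.
    unfold Rr. rewrite D1, D0, gmulxV. reflexivity.
  - apply (Rpos G f Hf (Z.to_nat y)); auto; lia.
Qed.

Lemma Rall G f (Hf : is_reciprocity_function G f) x y : inW x y -> Rr G f x y.
Proof.
  intros HW.
  assert (C2 : x <= 0 -> 0 < y -> Rr G f x y).
  { intros. assert (W1 : inW y (- x)) by (apply inW_rot; exact HW).
    pose proof (RQ1 G f Hf y (-x) ltac:(lia) ltac:(lia) W1) as R1.
    apply Rrot in R1; auto. pose proof (inW_rot _ _ W1) as W2.
    apply Rrot in R1; auto. pose proof (inW_rot _ _ W2) as W3.
    apply Rrot in R1; auto. rewrite !Z.opp_involutive in R1. exact R1. }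
  assert (C3 : x < 0 -> y <= 0 -> Rr G f x y).
  { intros. assert (W1 : inW (-x) (- y)).
    { unfold inW in *. rewrite Z.gcd_opp_r, Z.gcd_opp_l. exact HW. }
    pose proof (RQ1 G f Hf (-x) (-y) ltac:(lia) ltac:(lia) W1) as R1.
    apply Rrot in R1; auto. pose proof (inW_rot _ _ W1) as W2.
    apply Rrot in R1; auto. rewrite !Z.opp_involutive in R1. exact R1. }
  assert (C4 : 0 <= x -> y < 0 -> Rr G f x y).
  { intros. assert (W1 : inW (-y) x).
    { unfold inW in *. rewrite Z.gcd_opp_l, Z.gcd_comm. exact HW. }
    pose proof (RQ1 G f Hf (-y) x ltac:(lia) ltac:(lia) W1) as R1.
    apply Rrot in R1; auto. rewrite !Z.opp_involutive in R1. exact R1. }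
  destruct (Z_lt_le_dec 0 x); destruct (Z_lt_le_dec y 0).
  - apply C4; lia.
  - apply RQ1; auto.
  - destruct (Z.eq_dec x 0); [apply C4; lia | apply C3; lia].
  - destruct (Z.eq_dec y 0).
    + destruct (Z.eq_dec x 0).
      * subst. discriminate HW.
      * apply C3; lia.
    + apply C2; lia.
Qed.

Lemma cfQ_cons a l : cfQ (a :: l) = a * cfQ l - cfP l.
Proof. unfold cfQ, cfP. simpl. destruct (cfQP l). reflexivity. Qed.
Lemma cfP_cons a l : cfP (a :: l) = cfQ l.
Proof. unfold cfQ, cfP. simpl. destruct (cfQP l). reflexivity. Qed.

Lemma claim G f (Hf : is_reciprocity_function G f) l :
  inW (cfQ l) (cfP l) /\ inv_prod G f l = Dstar G f (cfQ l) (- cfP l).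
Proof.
  induction l as [|a l [IW IH]].
  - split; [reflexivity|]. simpl. symmetry. apply D1.
  - assert (W : inW (cfQ l) (a * cfQ l - cfP l)).
    { unfold inW in *. replace (a * cfQ l - cfP l) with (- cfP l + a * cfQ l) by ring.
      rewrite Z.gcd_add_mult_diag_r, Z.gcd_opp_r. exact IW. }
    split.
    + rewrite cfQ_cons, cfP_cons. unfold inW in *. rewrite Z.gcd_comm. exact W.
    + simpl inv_prod. rewrite IH, cfP_cons, cfQ_cons.
      pose proof (Rall G f Hf _ _ W) as R. unfold Rr in R.
      rewrite (Dper' G f (cfQ l) (- cfP l) (a * cfQ l - cfP l) a) in R by ring.
      rewrite R, gmulA, gmulVx, gmul1x. reflexivity.
Qed.

Lemma key G f (Hf : is_reciprocity_function G f) p q a0 l :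
  cfQ (a0 :: l) = q -> cfP (a0 :: l) = p -> inv_prod G f l = Dstar G f p q.
Proof.
  intros Hq Hp. rewrite cfQ_cons in Hq. rewrite cfP_cons in Hp.
  destruct (claim G f Hf l) as [_ ->]. subst.
  apply (Dper' G f _ _ _ (- a0)). ring.
Qed.

Theorem theorem1p8 (G : Group) (f : Z -> Z -> G)
  (Hf : is_reciprocity_function G f)
  (Hpres : forall p q, inW p q ->
     exists (a0 : Z) (l : list Z), cfQ (a0 :: l) = q /\ cfP (a0 :: l) = p) :
  (* (i) independence of the chosen presentation *)
  (forall (p q : Z) (a0 : Z) (l : list Z) (b0 : Z) (m : list Z),
      inW p q ->
      cfQ (a0 :: l) = q -> cfP (a0 :: l) = p ->
      cfQ (b0 :: m) = q -> cfP (b0 :: m) = p ->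
      D_of_seq G f a0 l = D_of_seq G f b0 m) /\
  (* (ii) the function so defined is a generalized Dedekind symbol *)
  (forall D : Z -> Z -> G,
      (forall (p q : Z) (a0 : Z) (l : list Z),
          inW p q -> cfQ (a0 :: l) = q -> cfP (a0 :: l) = p ->
          D p q = D_of_seq G f a0 l) ->
      is_gen_Dedekind_symbol G f D).
Proof.
  split.
  - intros p q a0 l b0 m _ H1 H2 H3 H4. unfold D_of_seq.
    rewrite (key G f Hf p q a0 l), (key G f Hf p q b0 m); auto.
  - intros D HD.
    assert (DD : forall p q, inW p q -> D p q = Dstar G f p q).
    { intros p q HW. destruct (Hpres p q HW) as [a0 [l [H1 H2]]].
      rewrite (HD p q a0 l HW H1 H2). unfold D_of_seq. apply (key G f Hf p q a0 l); auto. }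
    intros p q HW. split; [|split].
    + assert (W : inW p (q + p)).
      { unfold inW in *. replace (q + p) with (q + 1 * p) by ring.
        rewrite Z.gcd_add_mult_diag_r. exact HW. }
      rewrite DD, DD by auto. symmetry. apply (Dper' G f p q (q + p) 1). ring.
    + assert (W1 : inW p (- q)) by (unfold inW in *; rewrite Z.gcd_opp_r; exact HW).
      assert (W2 : inW (- p) q) by (unfold inW in *; rewrite Z.gcd_opp_l; exact HW).
      rewrite DD, DD by auto. rewrite <- (Dev G f (-p) q), Z.opp_involutive. reflexivity.
    + pose proof (Rall G f Hf p q HW) as R. unfold Rr in R.
      rewrite DD, DD by (auto; apply inW_rot; auto).
      rewrite R, <- gmulA, gmulxV, gmulx1. reflexivity.
Qed.
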